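(* Let $G$ be a Hausdorff topological group and $\beta\colon G\times Y\to Y$ a continuous global action on a topological space $Y$, and let $U$ be an open subset of $Y$. Let $\theta$ be the restriction of $\beta$ to $U$, i.e. the partial action with $U_g=U\cap\beta_g(U)$ and $\theta_g=\beta_g|_{U_{g^{-1}}}$. Then the enveloping space $U_G$ of $\theta$ is homeomorphic to an open subset of $Y$.
   Context: For a topological partial action $\theta=\{\theta_g\colon U_{g^{-1}}\to U_g\}$ on $U$, the enveloping space is $U_G=(G\times U)/R$ with the quotient topology, where $(g,x)R(h,y)$ iff $x\in U_{g^{-1}h}$ and $\theta_{h^{-1}g}(x)=y$. *)

(* Defs.v *)
From HB Require Import structures.
From mathcomp Require Import all_boot all_order all_algebra generic_quotient.
From mathcomp Require Import all_classical all_reals all_analysis.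
Set Implicit Arguments. Unset Strict Implicit. Unset Printing Implicit Defensive.
Local Open Scope classical_set_scope.

Definition is_group (G : Type) (mul : G -> G -> G) (inv : G -> G) (e : G) :=
  [/\ (forall a b c, mul a (mul b c) = mul (mul a b) c),
      (forall a, mul e a = a), (forall a, mul a e = a),
      (forall a, mul (inv a) a = e) & (forall a, mul a (inv a) = e)].

Definition is_action (G Y : Type) (mul : G -> G -> G) (e : G)
  (beta : G -> Y -> Y) :=
  (forall y, beta e y = y) /\ (forall g h y, beta (mul g h) y = beta g (beta h y)).

Definition restr_dom (G Y : Type) (beta : G -> Y -> Y) (U : set Y) (g : G)
  : set Y := U `&` (beta g @` U).
(* theta_g = beta_g restricted to U_{g^-1} *)
Definition restr_map (G Y : Type) (beta : G -> Y -> Y) (g : G) : Y -> Y :=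
  beta g.

Definition env_relP (G Y : Type) (mul : G -> G -> G) (inv : G -> G)
  (beta : G -> Y -> Y) (U : set Y) (p q : G * set_type U) : Prop :=
  restr_dom beta U (mul (inv p.1) q.1) (set_val p.2) /\
  restr_map beta (mul (inv q.1) p.1) (set_val p.2) = set_val q.2.

Arguments env_relP {G Y} mul inv beta U p q.

Definition env_rel (G Y : Type) (mul : G -> G -> G) (inv : G -> G)
  (beta : G -> Y -> Y) (U : set Y) : rel (G * set_type U) :=
  fun p q => `[< env_relP mul inv beta U p q >].
Arguments env_rel {G Y} mul inv beta U.

Section EnvEquiv.
Variables (G Y : Type) (mul : G -> G -> G) (inv : G -> G) (e : G)
  (beta : G -> Y -> Y) (U : set Y).
Hypotheses (hG : is_group mul inv e) (hA : is_action mul e beta).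

Let assoc a b c : mul a (mul b c) = mul (mul a b) c. Proof. by case: hG. Qed.
Let mul1 a : mul e a = a. Proof. by case: hG. Qed.
Let mulV a : mul (inv a) a = e. Proof. by case: hG. Qed.
Let mulVr a : mul a (inv a) = e. Proof. by case: hG. Qed.
Let act1 y : beta e y = y. Proof. by case: hA. Qed.
Let actM g h y : beta (mul g h) y = beta g (beta h y). Proof. by case: hA. Qed.

Let cancel3 a b c : mul (mul (inv a) b) (mul (inv b) c) = mul (inv a) c.
Proof. by rewrite -assoc (assoc b) mulVr mul1. Qed.

Lemma env_rel_refl : reflexive (env_rel mul inv beta U).
Proof.
Proof.
move=> [g x]; have Ux : U (set_val x) by apply: set_mem; case: x.
apply/asboolP; rewrite /env_relP /restr_dom /restr_map /=.
rewrite mulV act1; split=> //; split=> //; exists (set_val x) => //.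
Qed.

Lemma env_rel_trans_aux p q r :
  env_relP mul inv beta U p q -> env_relP mul inv beta U q r ->
  env_relP mul inv beta U p r.
Proof.
case: p q r => [g x] [h y] [k z].
have Uz : U (set_val z) by apply: set_mem; case: z.
rewrite /env_relP /restr_dom /restr_map /= => -[[Ux _] exy] [_ eyz].
have ezx : beta (mul (inv k) g) (set_val x) = set_val z.
  by rewrite -(cancel3 k h g) actM exy.
split=> //; split=> //; exists (set_val z) => //.
by rewrite -ezx -actM cancel3 mulV act1.
Qed.

Lemma env_rel_sym : symmetric (env_rel mul inv beta U).
Proof.
have H p q : env_relP mul inv beta U p q -> env_relP mul inv beta U q p.
  case: p q => [g x] [h y].
  have Uy : U (set_val y) by apply: set_mem; case: y.
  rewrite /env_relP /restr_dom /restr_map /= => -[[Ux _] exy].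
  split; last by rewrite -exy -actM cancel3 mulV act1.
  by split=> //; exists (set_val x).
by move=> p q; apply/asboolP/asboolP; apply: H.
Qed.

Lemma env_rel_trans : transitive (env_rel mul inv beta U).
Proof.
move=> q p r /asboolP hpq /asboolP hqr; apply/asboolP.
exact: env_rel_trans_aux hpq hqr.
Qed.

Definition env_equiv : equiv_rel (G * set_type U) :=
  EquivRel (env_rel mul inv beta U) env_rel_refl env_rel_sym env_rel_trans.
End EnvEquiv.

Definition enveloping_space (G Y : topologicalType) (mul : G -> G -> G)
  (inv : G -> G) (e : G) (beta : G -> Y -> Y) (U : set Y)
  (hG : is_group mul inv e) (hA : is_action mul e beta) : topologicalType :=
  quotient_topology {eq_quot (env_equiv U hG hA)}%qT.

Definition homeomorphic (X Z : topologicalType) : Prop :=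
  exists (f : X -> Z) (g : Z -> X),
    [/\ cancel f g, cancel g f, continuous f & continuous g].

(* Main.v *)
Require Import Defs.
From HB Require Import structures.
From mathcomp Require Import all_boot all_order all_algebra generic_quotient.
From mathcomp Require Import all_classical all_reals all_analysis.
Local Open Scope classical_set_scope.

Theorem lemma3p8 (G Y : topologicalType)
  (mul : G -> G -> G) (inv : G -> G) (e : G) (beta : G -> Y -> Y) (U : set Y)
  (hG : is_group mul inv e)
  (hmul : continuous (fun p : G * G => mul p.1 p.2))
  (hinv : continuous inv)
  (hHaus : hausdorff_space G)
  (hA : is_action mul e beta)
  (hbeta : continuous (fun p : G * Y => beta p.1 p.2))
  (hU : open U) :
  exists V : set Y, open V /\
    homeomorphic (enveloping_space U hG hA) (set_type V).
Proof.
have [assoc mul1 mul1r mulV mulVr] := hG.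
have [act1 actM] := hA.
have bK a z : beta (inv a) (beta a z) = z by rewrite -actM mulV act1.
have bKV a z : beta a (beta (inv a) z) = z by rewrite -actM mulVr act1.
have cb a : continuous (beta a).
  move=> z; apply: (@continuous_comp _ _ _ (fun z => (a, z))
    (fun p : G * Y => beta p.1 p.2)); last exact: hbeta.
  by apply: cvg_pair => /=; [exact: cvg_cst | exact: cvg_id].
pose V := [set y | exists g x, U x /\ beta g x = y].
exists V; split.
  rewrite (_ : V = \bigcup_(g in setT) (beta (inv g) @^-1` U)).
    by apply: bigcup_open => g _; exact: ((continuousP _).1 (cb (inv g)) U hU).
  apply/seteqP; split => y.
    by case=> g [x [Ux <-]]; exists g => //=; rewrite bK.
  by case=> g _ /= Ug; exists g, (beta (inv g) y); rewrite bKV.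
pose Qt := enveloping_space U hG hA.
have relE (p q : G * set_type U) : (\pi_Qt p = \pi_Qt q)%qT <->
    beta p.1 (set_val p.2) = beta q.1 (set_val q.2).
  case: p q => [g x] [h y] /=.
  have Ux := set_valP x; have Uy := set_valP y.
  split.
    move/(@eqmodP _ (env_equiv U hG hA))/asboolP.
    rewrite /env_relP /restr_map /= => -[_ <-].
    by rewrite actM bKV.
  move=> E; apply/(@eqmodP _ (env_equiv U hG hA))/asboolP.
  rewrite /env_relP /restr_dom /restr_map /=; split.
    split => //; exists (set_val y) => //.
    by rewrite actM -E bK.
  by rewrite actM E bK.
have hf0 (p : G * set_type U) : V (beta p.1 (set_val p.2)).
  by exists p.1, (set_val p.2); split => //; exact: set_valP.
pose f0 (p : G * set_type U) : set_type V := exist (fun y => y \in V) _ (mem_set (hf0 p)).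
have ex (y : set_type V) : exists p : G * set_type U,
    beta p.1 (set_val p.2) = set_val y.
  have [g [x [Ux yE]]] := set_valP y.
  by exists (g, exist (fun y => y \in U) x (mem_set Ux)); rewrite /= yE.
pose c y := sval (cid (ex y)).
have cE y : beta (c y).1 (set_val (c y).2) = set_val y := svalP (cid (ex y)).
pose f : Qt -> set_type V := f0 \o repr.
pose g (y : set_type V) : Qt := (\pi_Qt (c y))%qT.
exists f, g; split.
- move=> q; rewrite /g /f /=; rewrite -[RHS]reprK; apply/relE.
  by rewrite cE.
- move=> y; apply: val_inj => /=.
  rewrite /f /g /= -[sval y]/(set_val y) -cE; apply/relE; exact: reprK.
- rewrite /f; apply: (@repr_comp_continuous _ _ (set_type V) f0).
    apply: continuous_comp_initial => /=.
    have cv : continuous (@set_val Y U).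
      exact: (@initial_continuous _ _ (@set_val Y U)).
    move=> p; apply: (@continuous_comp _ _ _ (fun p : G * set_type U => (p.1, set_val p.2))
      (fun p : G * Y => beta p.1 p.2)); last exact: hbeta.
    apply: cvg_pair; first exact: cvg_fst.
    apply: (@continuous_comp _ _ _ (fun p : G * set_type U => p.2) (@set_val Y U)).
      exact: cvg_snd.
    exact: cv.
  by move=> a b /eqP/relE E; apply/eqP/val_inj.
- move=> y B nB; rewrite nbhs_simpl /=.
  set h := (c y).1; set x := (c y).2.
  pose m (u : set_type U) : Qt := (\pi_Qt (h, u))%qT.
  have cm : continuous m.
    move=> u; apply: (@continuous_comp _ _ _ (fun u : set_type U => (h, u)) (\pi_Qt)%qT).
      by apply: (@cvg_pair _ _ _ (nbhs u) (nbhs h) (nbhs u)); [exact: cvg_cst | exact: cvg_id].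
    exact: pi_continuous.
  have nx : nbhs x (m @^-1` B).
    apply: cm; rewrite /m /x /h -surjective_pairing; exact: nB.
  have nS : nbhs (set_val x) (set_val @` (m @^-1` B)).
    rewrite (@nbhs_subspace_interior Y U (set_val x)); first exact/subspace_subtypeP.
    by move/interior_id: hU => ->; exact: set_valP.
  have np : nbhs (set_val y) (beta (inv h) @^-1` (set_val @` (m @^-1` B))).
    apply: cb; rewrite -cE bK; exact: nS.
  have ny : nbhs y (set_val @^-1` (beta (inv h) @^-1` (set_val @` (m @^-1` B)))).
    exact: (@initial_continuous _ _ (@set_val Y V)).
  apply: filterS ny => z /= [u mu uE].
  rewrite /g (_ : (\pi_Qt (c z))%qT = m u) //; apply/relE => /=.
  by rewrite uE bKV cE.
Qed.
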